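(* Let $H$ be a connected, locally finite graph and let $S\subseteq\{0\}\times V(H)$ be a resolving set of $P_\infty\,\Box\, H$. Then for every $u\in V(H)$, the set $S\cup\{(1,u)\}$ is a resolving set of $P_{2\infty}\,\Box\, H$.
   Context: $P_\infty$ has vertex set $\mathbb N=\{0,1,2,\dots\}$ and $P_{2\infty}$ has vertex set $\mathbb Z$; in both, $i,j$ are adjacent iff $|i-j|=1$. The cartesian product $G\Box H$ has vertex set $V(G)\times V(H)$, where $(a,v)$ is adjacent to $(b,w)$ iff either $a=b$ and $vw\in E(H)$, or $v=w$ and $ab\in E(G)$; thus $d_{G\Box H}((a,v),(b,w))=d_G(a,b)+d_H(v,w)$. A vertex $x$ resolves $u,v$ if $d(u,x)\ne d(v,x)$; a set of vertices is a resolving set if every pair of distinct vertices is resolved by some vertex of it. *)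

(* Defs.v *)
From Stdlib Require Import ZArith List.
Open Scope Z_scope.

Inductive walk {X : Type} (adj : X -> X -> Prop) : X -> X -> nat -> Prop :=
| walk_nil : forall x, walk adj x x 0
| walk_cons : forall x y z n, adj x y -> walk adj y z n -> walk adj x z (S n).

Definition is_dist {X : Type} (adj : X -> X -> Prop) (x y : X) (d : nat) : Prop :=
  walk adj x y d /\ forall m, walk adj x y m -> (d <= m)%nat.

Definition simple_graph {X : Type} (adj : X -> X -> Prop) : Prop :=
  (forall x y, adj x y -> adj y x) /\ (forall x, ~ adj x x).

Definition connected {X : Type} (adj : X -> X -> Prop) : Prop :=
  forall x y, exists n, walk adj x y n.

Definition locally_finite {X : Type} (adj : X -> X -> Prop) : Prop :=
  forall x, exists l : list X, forall y, adj x y -> In y l.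

Definition resolves {X : Type} (adj : X -> X -> Prop) (x u v : X) : Prop :=
  exists du dv, is_dist adj u x du /\ is_dist adj v x dv /\ du <> dv.

Definition resolving_set {X : Type} (adj : X -> X -> Prop) (W : X -> Prop) : Prop :=
  forall u v, u <> v -> exists x, W x /\ resolves adj x u v.

(* P_infty on nat, P_{2 infty} on Z *)
Definition P_inf_adj (i j : nat) : Prop := S i = j \/ S j = i.
Definition P_2inf_adj (i j : Z) : Prop := i + 1 = j \/ j + 1 = i.

Definition box {A B : Type} (adjG : A -> A -> Prop) (adjH : B -> B -> Prop)
  (p q : A * B) : Prop :=
  (fst p = fst q /\ adjH (snd p) (snd q)) \/ (snd p = snd q /\ adjG (fst p) (fst q)).

(* Main.v *)
Require Import Defs.
From Stdlib Require Import ZArith List Lia Classical.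

Lemma walk_map {X Y : Type} (adj : X -> X -> Prop) (adj' : Y -> Y -> Prop) (f : X -> Y)
  (Hf : forall x y, adj x y -> adj' (f x) (f y)) :
  forall x y n, walk adj x y n -> walk adj' (f x) (f y) n.
Proof.
  intros x y n W; induction W.
  - constructor.
  - econstructor; eauto.
Qed.

Lemma walk_app {X : Type} (adj : X -> X -> Prop) :
  forall x y n, walk adj x y n -> forall z m, walk adj y z m -> walk adj x z (n + m).
Proof.
  intros x y n W; induction W; intros; simpl; auto.
  econstructor; eauto.
Qed.

Lemma dist_exists {X : Type} (adj : X -> X -> Prop) x y :
  forall n, walk adj x y n -> exists d, is_dist adj x y d.
Proof.
  intro n; induction n as [n IH] using (well_founded_induction lt_wf); intros W.
  destruct (classic (exists m, (m < n)%nat /\ walk adj x y m)) as [[m [Hm Wm]]|Hn].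
  - exact (IH m Hm Wm).
  - exists n; split; auto. intros m Wm.
    destruct (Nat.le_gt_cases n m); auto. exfalso; apply Hn; eauto.
Qed.

Section P.
Variable V : Type.
Variable adjH : V -> V -> Prop.

Lemma lift_H z : forall v w k, walk adjH v w k -> walk (box P_2inf_adj adjH) (z, v) (z, w) k.
Proof.
  intros v w k W.
  apply (walk_map adjH _ (fun v => (z, v))); auto.
  intros; left; simpl; auto.
Qed.

Lemma zwalk_up v : forall n x, walk (box P_2inf_adj adjH) (x, v) (x + Z.of_nat n, v) n.
Proof.
  induction n; intros x.
  - replace (x + Z.of_nat 0)%Z with x by lia; constructor.
  - apply walk_cons with (y := ((x + 1)%Z, v)).
    + right; simpl; split; auto; left; lia.
    + replace (x + Z.of_nat (S n))%Z with (x + 1 + Z.of_nat n)%Z by lia; auto.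
Qed.

Lemma zwalk_down v : forall n x, walk (box P_2inf_adj adjH) (x + Z.of_nat n, v) (x, v) n.
Proof.
  induction n; intros x.
  - replace (x + Z.of_nat 0)%Z with x by lia; constructor.
  - apply walk_cons with (y := ((x + Z.of_nat n)%Z, v)).
    + right; simpl; split; auto; right; lia.
    + auto.
Qed.

Lemma zwalk v x y : walk (box P_2inf_adj adjH) (x, v) (y, v) (Z.abs_nat (x - y)).
Proof.
  destruct (Z.le_gt_cases x y).
  - pose proof (zwalk_up v (Z.abs_nat (x - y)) x) as W.
    replace (x + Z.of_nat (Z.abs_nat (x - y)))%Z with y in W by lia; exact W.
  - pose proof (zwalk_down v (Z.abs_nat (x - y)) y) as W.
    replace (y + Z.of_nat (Z.abs_nat (x - y)))%Z with x in W by lia; exact W.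
Qed.

Lemma lower p q m : walk (box P_2inf_adj adjH) p q m ->
  exists k, walk adjH (snd p) (snd q) k /\ (Z.abs_nat (fst p - fst q) + k <= m)%nat.
Proof.
  intros W; induction W as [x|x y z n A W IH].
  - exists 0%nat; split; [constructor|]. replace (fst x - fst x)%Z with 0%Z by lia; simpl; lia.
  - destruct IH as [k [Wk Hk]].
    destruct A as [[E A]|[E A]].
    + exists (S k); split. econstructor; eauto. rewrite E; lia.
    + exists k; split. rewrite E; auto. unfold P_2inf_adj in A; lia.
Qed.

End P.

Theorem lemma8 (V : Type) (adjH : V -> V -> Prop)
  (Hsimple : simple_graph adjH) (Hconn : connected adjH) (Hlf : locally_finite adjH)
  (S : nat * V -> Prop) (HS0 : forall p, S p -> fst p = 0%nat)
  (HSres : resolving_set (box P_inf_adj adjH) S) (u : V) :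
  resolving_set (box P_2inf_adj adjH)
    (fun x : Z * V => (exists p, S p /\ x = (Z.of_nat (fst p), snd p)) \/ x = (1%Z, u)).
Proof.
  assert (Htr : forall a v s d, is_dist (box P_inf_adj adjH) (Z.abs_nat a, v) (0%nat, s) d ->
                 is_dist (box P_2inf_adj adjH) (a, v) (0%Z, s) d).
  { intros a v s d [W M]. split.
    - set (g := fun i : nat => if Z_le_dec 0 a then Z.of_nat i else (- Z.of_nat i)%Z).
      pose proof (walk_map (box P_inf_adj adjH) (box P_2inf_adj adjH) (fun p => (g (fst p), snd p))) as WM.
      assert (Hg : g (Z.abs_nat a) = a) by (unfold g; destruct (Z_le_dec 0 a); lia).
      assert (Hg0 : g 0%nat = 0%Z) by (unfold g; destruct (Z_le_dec 0 a); lia).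
      specialize (WM ltac:(intros x y [[E A]|[E A]];
        [left; simpl; split; [rewrite E|]; auto
        |right; simpl; split; auto; unfold g, P_inf_adj, P_2inf_adj in *;
         destruct (Z_le_dec 0 a); lia]) _ _ _ W).
      simpl in WM; rewrite Hg, Hg0 in WM; exact WM.
    - intros m Wm. apply M.
      pose proof (walk_map (box P_2inf_adj adjH) (box P_inf_adj adjH) (fun p => (Z.abs_nat (fst p), snd p))) as WM.
      specialize (WM ltac:(intros x y [[E A]|[E A]];
        [left; simpl; split; [rewrite E|]; auto
        |right; simpl; split; auto; unfold P_inf_adj, P_2inf_adj in *; lia]) _ _ _ Wm).
      exact WM. }
  intros [a v] [b w] Hne.
  destruct (classic ((Z.abs_nat a, v) = (Z.abs_nat b, w))) as [Heq|Hneq].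
  - injection Heq as Hab Hvw; subst w.
    assert (Hb : b = (- a)%Z) by (assert (a <> b) by congruence; lia).
    exists (1%Z, u); split; [right; reflexivity|].
    destruct (Hconn v u) as [k Wk].
    assert (Wx : forall x, walk (box P_2inf_adj adjH) (x, v) (1%Z, u) (Z.abs_nat (x - 1) + k)).
    { intros x. eapply walk_app. apply zwalk. apply lift_H; auto. }
    destruct (dist_exists _ _ _ _ (Wx a)) as [d1 D1].
    destruct (dist_exists _ _ _ _ (Wx b)) as [d2 D2].
    exists d1, d2; split; auto; split; auto.
    assert (key : forall x y dx dy, (Z.abs_nat (x - 1) < Z.abs_nat (y - 1))%nat ->
       is_dist (box P_2inf_adj adjH) (x, v) (1%Z, u) dx ->
       is_dist (box P_2inf_adj adjH) (y, v) (1%Z, u) dy -> (dx < dy)%nat).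
    { intros x y dx dy Hlt [Wdx Mdx] [Wdy Mdy].
      destruct (lower _ _ _ _ _ Wdy) as [k' [Wk' Hk']]. simpl in *.
      assert (Wxx : walk (box P_2inf_adj adjH) (x, v) (1%Z, u) (Z.abs_nat (x - 1) + k')).
      { eapply walk_app. apply zwalk. apply lift_H; auto. }
      specialize (Mdx _ Wxx). lia. }
    subst b. intro E; subst d2.
    destruct (Z_le_dec 0 a).
    + assert (a <> 0%Z) by (intro; subst; apply Hne; reflexivity).
      pose proof (key a (-a)%Z d1 d1 ltac:(lia) D1 D2); lia.
    + pose proof (key (-a)%Z a d1 d1 ltac:(lia) D2 D1); lia.
  - destruct (HSres _ _ Hneq) as [[n s] [Ss [du [dv [Du [Dv Hd]]]]]].
    pose proof (HS0 _ Ss) as H0; simpl in H0; subst n.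
    exists (0%Z, s); split.
    + left; exists (0%nat, s); split; auto.
    + exists du, dv; split; [apply Htr; auto|]; split; [apply Htr; auto|]; auto.
Qed.
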